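(* Let $T>0$ and let $F$ be either the NCV matrix $F=\begin{pmatrix}\mathbf{I}_3 & T\mathbf{I}_3\\ \mathbf{0}_3 & \mathbf{I}_3\end{pmatrix}$ (with $N=6$) or the NCA matrix $F=\begin{pmatrix}\mathbf{I}_3 & T\mathbf{I}_3 & \tfrac{T^2}{2}\mathbf{I}_3\\ \mathbf{0}_3 & \mathbf{I}_3 & T\mathbf{I}_3\\ \mathbf{0}_3&\mathbf{0}_3&\mathbf{I}_3\end{pmatrix}$ (with $N=9$). Let $n$ static sensors be located at $\mathbf{p}_1,\dots,\mathbf{p}_n\in\mathbb{R}^3$ and communicate over a directed graph $\mathcal{G}_W$ on $\{1,\dots,n\}$, with $\mathcal{N}_i=\{j_1,\dots,j_{|\mathcal{N}_i|}\}$ the neighbor set of sensor $i$. Let $W$ be a row-stochastic matrix with $W_{ii}>0$, $W_{ij}>0$ for $j\in\mathcal{N}_i$, and $W_{ij}=0$ otherwise. For each $i$ let $$H_i=\begin{pmatrix}(\mathbf{p}_{j_1}-\mathbf{p}_i)^\top & \mathbf{0}\\ \vdots & \vdots\\ (\mathbf{p}_{j_{|\mathcal{N}_i|}}-\mathbf{p}_i)^\top & \mathbf{0}\end{pmatrix}\in\mathbb{R}^{|\mathcal{N}_i|\times N},$$ i.e. the first three columns contain the relative sensor positions and the remaining $N-3$ columns are zero, and let $D_H=\mathrm{blkdiag}[H_i^\top H_i]$. If $\mathcal{G}_W$ is strongly connected, then the pair $(W\otimes F, D_H)$ is observable (in the structural/generic sense).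
   Context: This is the linear TDOA measurement model: with target state whose first three coordinates are the target position, sensor $i$'s (bias-corrected) measurement is $\mathbf{y}_i(k)=H_i\mathbf{x}(k)+\bm\nu_i(k)$. Observability here is structural: the pair is observable for almost all numerical values of the nonzero entries with their zero/nonzero pattern fixed. A directed graph is strongly connected if there is a directed path from every node to every other node. $\otimes$ is the Kronecker product and $\mathrm{blkdiag}$ the block-diagonal matrix. *)

(* Defs.v *)
From HB Require Import structures.
From mathcomp Require Import all_boot all_order all_algebra.
From mathcomp Require Import mpoly.
Set Implicit Arguments. Unset Strict Implicit. Unset Printing Implicit Defensive.
Import Order.TTheory GRing.Theory Num.Theory.
Local Open Scope ring_scope.

Definition idx_split (n N : nat) (k : 'I_(n * N)) : 'I_n * 'I_N :=
  enum_val (cast_ord (esym (mxvec_cast n N)) k).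

Definition kron (R : pzRingType) (n N : nat) (W : 'M[R]_n) (F : 'M[R]_N)
  : 'M[R]_(n * N) :=
  \matrix_(k1, k2) (let: (i, a) := idx_split k1 in let: (j, b) := idx_split k2 in
                     W i j * F a b).

Definition blkdiag (R : pzRingType) (n N : nat) (B : 'I_n -> 'M[R]_N)
  : 'M[R]_(n * N) :=
  \matrix_(k1, k2) (let: (i, a) := idx_split k1 in let: (j, b) := idx_split k2 in
                     if i == j then B i a b else 0).

(* Entry (a,b): with blocks of size 3, block (u,v) is (T^(v-u)/(v-u)!) I_3 for
   u <= v and 0 otherwise. *)
Definition motion_mx (R : fieldType) (nb : nat) (T : R) : 'M[R]_(3 * nb) :=
  \matrix_(a, b)
    (if ((a %% 3)%N == (b %% 3)%N) && ((a %/ 3)%N <= (b %/ 3)%N)%N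
     then T ^+ (b %/ 3 - a %/ 3)%N / ((b %/ 3 - a %/ 3)`!)%:R else 0).

Definition NCV (R : fieldType) (T : R) : 'M[R]_6 := motion_mx 2 T.
Definition NCA (R : fieldType) (T : R) : 'M[R]_9 := motion_mx 3 T.

Definition strongly_connected (n : nat) (e : rel 'I_n) : Prop :=
  forall i j : 'I_n, connect e i j.

Definition nbrs (n : nat) (adj : rel 'I_n) (i : 'I_n) : {set 'I_n} :=
  [set j | adj i j].

Definition consensus_weights (R : numDomainType) (n : nat) (adj : rel 'I_n)
  (W : 'M[R]_n) : Prop :=
  [/\ forall i j, 0 <= W i j,
      forall i, \sum_j W i j = 1,
      forall i, 0 < W i i,
      forall i j, adj i j -> 0 < W i j
    & forall i j, i != j -> ~~ adj i j -> W i j = 0].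

(* H_i : |N_i| x N, row r = ((p_{j_r} - p_i)^T, 0), j_1 < ... < j_|N_i| *)
Definition H_i (S : pzRingType) (n N : nat) (adj : rel 'I_n)
  (p : 'I_n -> 'rV[S]_3) (i : 'I_n) : 'M[S]_(#|nbrs adj i|, N) :=
  \matrix_(r, c) (if (c < 3)%N then (p (enum_val r) - p i) 0 (inord c) else 0).

Definition D_H (S : pzRingType) (n N : nat) (adj : rel 'I_n)
  (p : 'I_n -> 'rV[S]_3) : 'M[S]_(n * N) :=
  blkdiag (fun i => (H_i N adj p i)^T *m H_i N adj p i).

(* symbolic positions: coordinate c of p_j is the indeterminate X_(j,c) *)
Definition sym_pos (R : comNzRingType) (n : nat) (j : 'I_n)
  : 'rV[{mpoly R[n * 3]}]_3 :=
  \row_c 'X_(mxvec_index j c).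

Definition observable (R : pzRingType) (m q : nat) (A : 'M[R]_m) (C : 'M[R]_(q, m))
  : Prop :=
  forall x : 'cV[R]_m, (forall k, C *m (iter k (mulmx A) x) = 0) -> x = 0.

Definition realize (R : pzRingType) (p q : nat) (P : 'M[bool]_(p, q))
  (th : 'M[R]_(p, q)) : 'M[R]_(p, q) :=
  \matrix_(i, j) (if P i j then th i j else 0).

(* Structural observability of the pattern pair (Ap, Cp): the realization is
   observable for almost all parameter values, i.e. outside the zero set of a
   nonzero polynomial in the parameters. *)
Definition struct_observable (R : fieldType) (m q : nat)
  (Ap : 'M[bool]_m) (Cp : 'M[bool]_(q, m)) : Prop :=
  exists P : {mpoly R[m * m + q * m]}, P != 0 /\
    forall u : 'rV[R]_(m * m + q * m),
      P.@[fun k => u 0 k] != 0 ->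
      observable (realize Ap (vec_mx (lsubmx u))) (realize Cp (vec_mx (rsubmx u))).

Definition pattern (R : pzRingType) (p q : nat) (M : 'M[R]_(p, q)) : 'M[bool]_(p, q) :=
  \matrix_(i, j) (M i j != 0).

(* Main.v *)
Require Import Defs.
From HB Require Import structures.
From mathcomp Require Import all_boot all_order all_algebra.
From mathcomp Require Import mpoly.
From mathcomp Require Import zify.
Import Order.TTheory GRing.Theory Num.Theory.
Local Open Scope ring_scope.
Set Implicit Arguments. Unset Strict Implicit. Unset Printing Implicit Defensive.


Definition mpow (R : pzRingType) m (A : 'M[R]_m) k := iter k (mulmx A) 1%:M.

Lemma iter_mpow (R : pzRingType) m (A : 'M[R]_m) k (x : 'cV_m) :
  iter k (mulmx A) x = mpow A k *m x.
Proof.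
elim: k => [|k IH] /=; first by rewrite /mpow /= mul1mx.
by rewrite IH /mpow /= mulmxA.
Qed.

Lemma map_mpow (R S : nzRingType) (f : {rmorphism R -> S}) m (A : 'M[R]_m) k :
  map_mx f (mpow A k) = mpow (map_mx f A) k.
Proof.
elim: k => [|k IH] /=; first by rewrite /mpow /= map_mx1.
by rewrite /mpow /= map_mxM; congr (_ *m _); exact: IH.
Qed.

Lemma map_realize (R S : nzRingType) (f : {rmorphism R -> S}) p q (P : 'M[bool]_(p,q)) th :
  map_mx f (realize P th) = realize P (map_mx f th).
Proof. by apply/matrixP => i j; rewrite !mxE; case: (P i j) => //; rewrite rmorph0. Qed.

Lemma key (R : fieldType) (m q : nat) (Ap : 'M[bool]_m) (Cp : 'M[bool]_(q,m))
  (K : nat) (L : nat -> 'M[R]_(m,q)) (A0 : 'M[R]_m) (C0 : 'M[R]_(q,m)) :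
  (forall i j, A0 i j != 0 -> Ap i j) -> (forall i j, C0 i j != 0 -> Cp i j) ->
  \det (\sum_(k < K) L k *m C0 *m mpow A0 k) != 0 -> struct_observable R Ap Cp.
Proof.
move=> HA HC Hdet.
pose V := (m * m + q * m)%N.
pose U : 'rV[{mpoly R[V]}]_V := \row_k 'X_k.
pose Apl := realize Ap (vec_mx (lsubmx U)).
pose Cpl := realize Cp (vec_mx (rsubmx U)).
pose Lp k := map_mx (fun c => c%:MP_[V]) (L k).
pose P := \det (\sum_(k < K) Lp k *m Cpl *m mpow Apl k).
have evalP : forall u : 'rV[R]_V, P.@[fun k => u 0 k] =
   \det (\sum_(k < K) L k *m realize Cp (vec_mx (rsubmx u)) *m
          mpow (realize Ap (vec_mx (lsubmx u))) k).
  move=> u.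
  have hU : map_mx (meval (fun k => u 0 k)) U = u by apply/matrixP => i j; rewrite !mxE ord1 mevalXU.
  rewrite /P -det_map_mx.
  congr (\det _).
  have -> : forall M : 'I_K -> 'M[{mpoly R[V]}]_m, map_mx (meval (fun k => u 0 k)) (\sum_(k < K) M k) = \sum_(k < K) map_mx (meval (fun k => u 0 k)) (M k).
    move=> M; apply/matrixP => i j; rewrite mxE summxE rmorph_sum summxE.
    by apply: eq_bigr => k _; rewrite mxE.
  apply: eq_bigr => k _.
  rewrite !map_mxM map_mpow !map_realize !map_vec_mx map_lsubmx map_rsubmx hU.
  congr (_ *m _ *m _).
  by apply/matrixP => i j; rewrite !mxE; exact: mevalC.
exists P; split.
  apply/negP => /eqP P0.
  move: (evalP (row_mx (mxvec A0) (mxvec C0))).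
  rewrite P0 meval0 row_mxKl row_mxKr !mxvecK.
  have -> : realize Ap A0 = A0.
    apply/matrixP => i j; rewrite mxE; case: (boolP (A0 i j == 0)) => [/eqP ->|/HA ->] //.
    by case: (Ap i j).
  have -> : realize Cp C0 = C0.
    apply/matrixP => i j; rewrite mxE; case: (boolP (C0 i j == 0)) => [/eqP ->|/HC ->] //.
    by case: (Cp i j).
  by move=> h; move: Hdet; rewrite -h eqxx.
move=> u; rewrite evalP => hdet x hx.
set G := \sum_(k < K) _ in hdet.
have GU : G \in unitmx by rewrite unitmxE unitfE.
have Gx : G *m x = 0.
  rewrite /G mulmx_suml big1 // => k _.
  by rewrite -!mulmxA -iter_mpow hx mulmx0.
by rewrite -(mulKmx GU x) Gx mulmx0.
Qed.


Lemma idx_splitK n N (i : 'I_n) (a : 'I_N) : idx_split (mxvec_index i a) = (i, a).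
Proof. by rewrite /idx_split /mxvec_index cast_ordK enum_rankK. Qed.

Lemma mxvec_indexK n N (k : 'I_(n * N)) :
  mxvec_index (idx_split k).1 (idx_split k).2 = k.
Proof. by rewrite /idx_split /mxvec_index -surjective_pairing enum_valK cast_ordKV. Qed.

Lemma idx_split_inj n N : injective (@idx_split n N).
Proof. by move=> k1 k2 h; rewrite -(mxvec_indexK k1) -(mxvec_indexK k2) h. Qed.

Lemma sum_idx (V : nmodType) n N (f : 'I_n -> 'I_N -> V) :
  \sum_(k < n * N) f (idx_split k).1 (idx_split k).2 = \sum_i \sum_a f i a.
Proof.
rewrite pair_bigA (reindex (fun p : 'I_n * 'I_N => mxvec_index p.1 p.2)) /=.
  by apply: eq_bigr => -[i a] _; rewrite idx_splitK.
by exists (@idx_split n N) => [[i a]|k] _; rewrite ?idx_splitK ?mxvec_indexK.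
Qed.

Lemma kronE (R : pzRingType) n N (W : 'M[R]_n) (F : 'M[R]_N) k1 k2 :
  kron W F k1 k2 = W (idx_split k1).1 (idx_split k2).1 * F (idx_split k1).2 (idx_split k2).2.
Proof. by rewrite mxE; case: (idx_split k1) => i a; case: (idx_split k2). Qed.

Lemma blkdiagE (R : pzRingType) n N (B : 'I_n -> 'M[R]_N) k1 k2 :
  blkdiag B k1 k2 = if (idx_split k1).1 == (idx_split k2).1 then
     B (idx_split k1).1 (idx_split k1).2 (idx_split k2).2 else 0.
Proof. by rewrite mxE; case: (idx_split k1) => i a; case: (idx_split k2). Qed.

Lemma kronM (R : comPzRingType) n N (W1 W2 : 'M[R]_n) (F1 F2 : 'M[R]_N) :
  kron W1 F1 *m kron W2 F2 = kron (W1 *m W2) (F1 *m F2).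
Proof.
apply/matrixP => k1 k2; rewrite [RHS](@kronE R) !mxE.
under eq_bigr do rewrite !(@kronE R).
rewrite (sum_idx (fun i a => W1 (idx_split k1).1 i * F1 (idx_split k1).2 a *
   (W2 i (idx_split k2).1 * F2 a (idx_split k2).2))).
rewrite big_distrlr /=; apply: eq_bigr => i _; apply: eq_bigr => a _.
by rewrite mulrACA.
Qed.

Lemma kron11 (R : pzRingType) n N : kron (1%:M : 'M[R]_n) (1%:M : 'M[R]_N) = 1%:M.
Proof.
apply/matrixP => k1 k2; rewrite (@kronE R) !mxE.
rewrite -(inj_eq (@idx_split_inj n N) k1 k2).
case: (idx_split k1) => i a; case: (idx_split k2) => j b /=.
rewrite xpair_eqE; case: (i == j); case: (a == b); by rewrite ?mulr1 ?mulr0.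
Qed.

Lemma kron_sum (R : pzRingType) n N (W : 'M[R]_n) K (F : 'I_K -> 'M[R]_N) :
  kron W (\sum_(k < K) F k) = \sum_(k < K) kron W (F k).
Proof.
apply/matrixP => k1 k2; rewrite (@kronE R) !summxE mulr_sumr.
by apply: eq_bigr => k _; rewrite (@kronE R).
Qed.

Lemma kron_mpow (R : comPzRingType) n N (F : 'M[R]_N) k :
  iter k (mulmx (kron (1%:M : 'M[R]_n) F)) 1%:M = kron 1%:M (iter k (mulmx F) 1%:M).
Proof.
elim: k => [|k IH] /=; first by rewrite kron11.
by rewrite IH kronM mul1mx.
Qed.

Lemma kron_tr (R : pzRingType) n N (F : 'M[R]_N) :
  (kron (1%:M : 'M[R]_n) F)^T = kron 1%:M F^T.
Proof.
by apply/matrixP => k1 k2; rewrite mxE !(@kronE R) !mxE eq_sym.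
Qed.


Definition Sh (R : pzRingType) N : 'M[R]_N := \matrix_(a, b) ((b : nat) == a + 3)%N%:R.
Definition Pr (R : pzRingType) N : 'M[R]_N := \matrix_(a, b) ((a == b) && (a < 3)%N)%:R.
Definition Spow (R : pzRingType) N k : 'M[R]_N := iter k (mulmx (Sh R N)) 1%:M.

Lemma SpowE (R : pzRingType) N k (a b : 'I_N) :
  Spow R N k a b = ((b : nat) == a + 3 * k)%N%:R.
Proof.
elim: k a b => [|k IH] a b.
  by rewrite /Spow /= mxE muln0 addn0 eq_sym.
rewrite /Spow /= mxE.
under eq_bigr do rewrite mxE -/(Spow R N k) IH.
case: (ltnP (a + 3) N) => h.
  rewrite (bigD1 (Ordinal h)) //= big1 ?addr0.
    by rewrite eqxx mul1r mulnS addnA.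
  move=> c hc; have -> : ((c : nat) == a + 3)%N = false.
    by apply/negbTE; apply: contra hc => /eqP h2; apply/eqP/val_inj.
  by rewrite mul0r.
rewrite big1.
  have -> : ((b : nat) == a + 3 * k.+1)%N = false by apply/negbTE/eqP => /= ?; have := ltn_ord b; lia.
  done.
move=> c _; have -> : ((c : nat) == a + 3)%N = false by apply/negbTE/eqP => /= ?; have := ltn_ord c; lia.
by rewrite mul0r.
Qed.

Lemma sum_X (R : pzRingType) nb :
  \sum_(k < nb) ((Spow R (3 * nb) k)^T *m Pr R (3 * nb) *m Spow R (3 * nb) k) = 1%:M.
Proof.
set N := (3 * nb)%N.
apply/matrixP => a b; rewrite summxE.
have E : forall k : 'I_nb, ((Spow R N k)^T *m Pr R N *m Spow R N k) a b =
   \sum_(c < N) (((a : nat) == c + 3 * k)%N && (c < 3)%N && (b == a))%:R.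
  move=> k; rewrite -mulmxA mxE; apply: eq_bigr => c _.
  rewrite !mxE SpowE.
  rewrite (bigD1 c) //= big1 ?addr0.
    rewrite !mxE SpowE eqxx /=.
    case: (boolP ((a : nat) == c + 3 * k)%N) => /= h; last by rewrite mul0r.
    case: (c < 3)%N; rewrite ?mul1r ?mul0r //.
    by rewrite /= -val_eqE /= (eqP h).
  by move=> d hd; rewrite !mxE eq_sym (negbTE hd) mul0r.
under eq_bigr do rewrite E.
have ha : (a %/ 3 < nb)%N by have := ltn_ord a; rewrite /N; lia.
have hc : (a %% 3 < N)%N by have := ltn_ord a; rewrite /N; lia.
rewrite (bigD1 (Ordinal ha)) //= (bigD1 (Ordinal hc)) //= big1 ?addr0; last first.
  move=> c hc'; case: (boolP ((a : nat) == c + 3 * (a %/ 3))%N) => h //=.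
  exfalso; move: hc' => /eqP; apply; apply/val_inj => /=; move/eqP: h; lia.
rewrite big1 ?addr0.
  have -> : ((a : nat) == a %% 3 + 3 * (a %/ 3))%N by apply/eqP; lia.
  have -> : (a %% 3 < 3)%N by lia.
  by rewrite mxE eq_sym.
move=> k hk; rewrite big1 // => c _.
case: (boolP ((a : nat) == c + 3 * k)%N) => h //=.
case: (boolP (c < 3)%N) => h3 //=.
exfalso; move: hk => /eqP; apply; apply/val_inj => /=; move/eqP: h; lia.
Qed.


Lemma exists_nbr n (adj : rel 'I_n) : (1 < n)%N -> strongly_connected adj ->
  forall i, exists j0, adj i j0.
Proof.
move=> h1 hsc i.
have h0 : (0 < n)%N by apply: ltn_trans h1.
pose j := if i == Ordinal h0 then Ordinal h1 else Ordinal h0.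
have hji : j != i.
  rewrite /j; case: (i =P Ordinal h0) => [->|/eqP ne]; last by rewrite eq_sym.
  by apply/negP => /eqP/(congr1 val).
move: (hsc i j) => /connectP [p pth lst].
case: p pth lst => [/= _ eq|j0 p /= /andP [h _] _]; last by exists j0.
by move: hji; rewrite eq eqxx.
Qed.

Lemma Hnz (R : realFieldType) n N (adj : rel 'I_n) (i j0 : 'I_n) (a : 'I_N) :
  irreflexive adj -> adj i j0 -> (a < 3)%N ->
  ((H_i N adj (@sym_pos R n) i)^T *m H_i N adj (@sym_pos R n) i) a a != 0.
Proof.
move=> irr hij ha.
have hj0 : j0 \in nbrs adj i by rewrite inE.
have ne : i != j0 by apply/eqP => e; move: hij; rewrite e irr.
pose c : 'I_3 := inord a.
pose v : 'I_(n * 3) -> R := fun k => (k == mxvec_index j0 c)%:R.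
have vi : v (mxvec_index i c) = 0.
  rewrite /v; case: eqP => // /(congr1 (@idx_split n 3)); rewrite !idx_splitK.
  by case => e; move: ne; rewrite e eqxx.
have vj : v (mxvec_index j0 c) = 1 by rewrite /v eqxx.
have key : meval v (((H_i N adj (@sym_pos R n) i)^T *m H_i N adj (@sym_pos R n) i) a a) != 0.
  rewrite mxE rmorph_sum.
  have hX k : (meval v : {rmorphism {mpoly R[n * 3]} -> R}) 'X_k = v k by exact: mevalXU.
  under eq_bigr do rewrite !mxE ha rmorphM !rmorphB !hX -/c.
  rewrite (bigD1 (enum_rank_in hj0 j0)) //= enum_rankK_in // vi vj subr0 mulr1.
  apply: lt0r_neq0; apply: ltr_pwDl; first exact: ltr01.
  by apply: sumr_ge0 => r _; rewrite -expr2 sqr_ge0.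
by apply/negP => /eqP h0; move: key; rewrite h0 meval0 eqxx.
Qed.

Lemma gen (R : realFieldType) (T : R) n nb (adj : rel 'I_n) (W : 'M[R]_n) :
  0 < T -> (1 < n)%N -> irreflexive adj -> consensus_weights adj W ->
  strongly_connected adj ->
  struct_observable R (pattern (kron W (motion_mx nb T)))
    (pattern (D_H (3 * nb) adj (@sym_pos R n))).
Proof.
move=> hT hn irr [_ _ Wii _ _] hsc.
apply: (@key _ _ _ _ _ nb (fun k => kron 1%:M (Spow R (3 * nb) k)^T)
          (kron 1%:M (Sh R (3 * nb))) (kron 1%:M (Pr R (3 * nb)))).
- move=> k1 k2 H; rewrite mxE (@kronE R); move: H; rewrite (@kronE R) !mxE.
  case: (idx_split k1) => i a; case: (idx_split k2) => j b /=.
  case: (i =P j) => [<-|_]; last by rewrite mul0r eqxx.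
  case: (boolP ((b : nat) == a + 3)%N) => hb; last by rewrite mulr0 eqxx.
  move=> _; apply: mulf_neq0; first exact: lt0r_neq0.
  have -> : ((a %% 3 == b %% 3) && (a %/ 3 <= b %/ 3))%N = true.
    by move/eqP: hb => ->; apply/andP; split; [apply/eqP|]; lia.
  have -> : (b %/ 3 - a %/ 3)%N = 1%N by move/eqP: hb => ->; lia.
  by rewrite expr1 divr1; apply: lt0r_neq0.
- move=> k1 k2 H; rewrite mxE /D_H blkdiagE; rewrite (@kronE R) !mxE in H; move: H.
  case: (idx_split k1) => i a; case: (idx_split k2) => j b /=.
  case: (i =P j) => _ /=; last by rewrite ?mul0r ?eqxx.
  case: (boolP ((a == b) && (a < 3)%N)) => /= hb; last by rewrite mulr0 eqxx.
  move=> _; case/andP: hb => /eqP <- ha.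
  have [j0 hj0] := exists_nbr hn hsc i.
  exact: Hnz irr hj0 ha.
- rewrite (eq_bigr (fun k : 'I_nb => kron (1%:M : 'M[R]_n)
     ((Spow R (3 * nb) k)^T *m Pr R (3 * nb) *m Spow R (3 * nb) k))); last first.
    by move=> k _; rewrite /mpow kron_mpow !kronM !mul1mx.
  by rewrite -kron_sum sum_X kron11 det1 oner_neq0.
Qed.

Unset Implicit Arguments.

Theorem theorem1 (R : realFieldType) (T : R) (n : nat) (adj : rel 'I_n)
    (W : 'M[R]_n) :
  0 < T -> (1 < n)%N ->
  irreflexive adj ->
  consensus_weights adj W ->
  strongly_connected adj ->
  struct_observable R (pattern (kron W (NCV T)))
    (pattern (D_H 6 adj (@sym_pos R n)))
  /\
  struct_observable R (pattern (kron W (NCA T)))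
    (pattern (D_H 9 adj (@sym_pos R n))).
Proof.
move=> hT hn irr hW hsc; split.
- exact: (@gen R T n 2 adj W hT hn irr hW hsc).
- exact: (@gen R T n 3 adj W hT hn irr hW hsc).
Qed.
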